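(* Let $G$ be a disjoint union of finitely many star graphs $S_{n_1},\dots,S_{n_r}$ ($r\ge 1$, each $n_i\ge 1$). Under optimal play, the result of the Sign Game on $G$ is: (1) a draw if every $n_i$ is even; (2) a win for Player 2 if at least one $n_i$ is odd and the number of indices $i$ with $n_i$ even is even; (3) a win for Player 1 if at least one $n_i$ is odd and the number of indices $i$ with $n_i$ even is odd.
   Context: The Sign Game on a finite simple undirected graph $G$: two players, Player P and Player N, alternate turns; the player who moves first is called Player 1 and the other Player 2 (either of P, N may be Player 1). On a turn, a player chooses a vertex of $G$ not yet assigned a value and assigns it $+1$ or $-1$. The game ends when every vertex has been assigned. The score of an edge $uv$ is the product of the values of $u$ and $v$, and the score $s(G)$ of the game is the sum of the scores of all edges. Player P wins if $s(G)>0$, Player N wins if $s(G)<0$, and the game is a draw if $s(G)=0$. ''Under optimal play'' means both players play optimally, each with primary goal of winning and secondary goal of at least drawing; the result is the outcome of this finite perfect-information game under such play. The star graph $S_n$ has $n+1$ vertices: one central vertex adjacent to each of $n$ leaves, with no other edges. *)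

(* Defs.v *)
From mathcomp Require Import all_boot all_order all_algebra.
Set Implicit Arguments. Unset Strict Implicit. Unset Printing Implicit Defensive.
Import Order.TTheory GRing.Theory Num.Theory.
Local Open Scope ring_scope.

(* The Sign Game on a finite simple graph given by an (irreflexive,
   symmetric) adjacency relation e on a finite vertex type T. *)
Section SignGame.
Variables (T : finType) (e : rel T).

(* A (partial) assignment: None = not yet assigned, Some true = +1,
   Some false = -1. *)
Definition assignment := {ffun T -> option bool}.

Definition spin (a : assignment) (x : T) : int :=
  match a x with Some true => 1 | Some false => -1 | None => 0 end.

Definition edges : {set {set T}} :=
  [set E : {set T} | [exists x, exists y, e x y && (E == [set x; y])]].

Definition score (a : assignment) : int :=
  \sum_(E in edges) \prod_(x in E) spin a x.

Definition unassigned (a : assignment) : seq T :=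
  [seq x <- enum T | a x == None].

Definition moves (a : assignment) : seq (T * bool) :=
  [seq (x, b) | x <- unassigned a, b <- [:: true; false]].

Definition assign (a : assignment) (m : T * bool) : assignment :=
  [ffun y => if y == m.1 then Some m.2 else a y].

(* Minimax value of the outcome sgz(s(G)) in {-1,0,1}: +1 = P wins,
   0 = draw, -1 = N wins.  P (to move when pturn = true) maximises,
   N minimises.  k is fuel (number of remaining moves). *)
Fixpoint value (k : nat) (pturn : bool) (a : assignment) : int :=
  match k with
  | 0%N => sgz (score a)
  | k'.+1 =>
      if nilp (moves a) then sgz (score a)
      else if pturn then
        foldr Num.max (-1) [seq value k' (~~ pturn) (assign a m) | m <- moves a]
      else
        foldr Num.min 1 [seq value k' (~~ pturn) (assign a m) | m <- moves a]
  end.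

(* Result of the game from the empty position; p_first = Player P moves
   first (i.e. P is Player 1). *)
Definition game_value (p_first : bool) : int :=
  value #|T| p_first [ffun _ => None].

(* Outcomes in terms of Player 1 / Player 2, for either assignment of
   the roles P, N to Player 1. *)
Definition sign_game_draw : Prop := forall p_first, game_value p_first = 0.
Definition player1_wins : Prop :=
  forall p_first, game_value p_first = (if p_first then 1 else -1).
Definition player2_wins : Prop :=
  forall p_first, game_value p_first = (if p_first then -1 else 1).

End SignGame.

(* Disjoint union of stars S_{n_1}, ..., S_{n_r}, ns = [:: n_1; ...; n_r].
   Vertex (i, j): star i, j = 0 its centre, j = 1..n_i its leaves. *)
Definition stars_vertex (ns : seq nat) : finType :=
  {i : 'I_(size ns) & 'I_(nth 0%N ns i).+1}.

Definition stars_adj (ns : seq nat) : rel (stars_vertex ns) :=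
  fun u v => (tag u == tag v) &&
             ((val (tagged u) == 0%N) != (val (tagged v) == 0%N)).

(* Main.v *)
Require Import Defs.
From mathcomp Require Import all_boot all_order all_algebra.
From mathcomp Require Import zify ring lra.
Set Implicit Arguments. Unset Strict Implicit. Unset Printing Implicit Defensive.
Import Order.TTheory GRing.Theory Num.Theory.
Local Open Scope ring_scope.

Section Game.
Variables (T : finType) (e : rel T).
Local Notation A := (assignment T).

Definition U (a : A) := #|[pred x | a x == None]|.

Lemma mem_moves (a : A) v b : ((v, b) \in moves a) = (a v == None).
Proof.
rewrite /moves; apply/allpairsPdep/idP.
- by case=> x [y [hx hy [-> _]]]; move: hx; rewrite mem_filter => /andP[].
- move=> h; exists v, b; rewrite mem_filter h mem_enum /=; split=> //.
  by case: b.
Qed.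

Lemma moves_nil (a : A) : nilp (moves a) -> forall v, a v != None.
Proof.
move=> h v; apply/negP => hv.
have : (v, true) \in moves a by rewrite mem_moves hv.
by move: h => /nilP ->.
Qed.

Lemma U_assign (a : A) m : m \in moves a -> U a = (U (assign a m)).+1.
Proof.
case: m => v b; rewrite mem_moves => hv.
rewrite /U (cardD1 v) inE hv add1n; congr S; apply: eq_card => x.
rewrite !inE ffunE /=; case: (x =P v) => //= ->; by rewrite eqxx.
Qed.

Lemma U0_nil (a : A) : U a = 0%N -> nilp (moves a).
Proof.
case E: (moves a) => [|m s] //= h.
have : m \in moves a by rewrite E mem_head.
by move/U_assign; rewrite h.
Qed.

Lemma foldr_max_ge (s : seq int) d x : x \in s -> x <= foldr Num.max d s.
Proof.
elim: s => //= y s IH; rewrite inE => /orP[/eqP->|h]; rewrite le_max ?lexx //.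
by rewrite IH ?orbT.
Qed.

Lemma foldr_max_le (s : seq int) d t : d <= t -> all (fun x => x <= t) s -> foldr Num.max d s <= t.
Proof. by move=> hd; elim: s => //= y s IH /andP[hy hs]; rewrite ge_max hy IH. Qed.

Lemma foldr_min_le (s : seq int) d x : x \in s -> foldr Num.min d s <= x.
Proof.
elim: s => //= y s IH; rewrite inE => /orP[/eqP->|h]; rewrite ge_min ?lexx //.
by rewrite IH ?orbT.
Qed.

Lemma foldr_min_ge (s : seq int) d t : t <= d -> all (fun x => t <= x) s -> t <= foldr Num.min d s.
Proof. by move=> hd; elim: s => //= y s IH /andP[hy hs]; rewrite le_min hy IH. Qed.

Lemma sgz_range (x : int) : -1 <= sgz x <= 1.
Proof. by case: sgzP. Qed.

Lemma value_range k p (a : A) : -1 <= value e k p a <= 1.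
Proof.
elim: k p a => [|k IH] p a /=; first exact: sgz_range.
case: ifP => _; first exact: sgz_range.
case: p.
- apply/andP; split.
  + case E: (moves a) => [|m s]; first by rewrite /=.
    apply: le_trans (foldr_max_ge _ (map_f _ (mem_head m s))).
    by case/andP: (IH false (assign a m)).
  + apply: foldr_max_le => //; apply/allP => x /mapP [m _ ->].
    by case/andP: (IH false (assign a m)).
- apply/andP; split.
  + apply: foldr_min_ge => //; apply/allP => x /mapP [m _ ->].
    by case/andP: (IH true (assign a m)).
  + case E: (moves a) => [|m s]; first by rewrite /=.
    apply: le_trans (foldr_min_le _ (map_f _ (mem_head m s))) _.
    by case/andP: (IH true (assign a m)).
Qed.

Definition sgn (b : bool) : int := if b then 1 else -1.

Lemma value_strat (sig : bool) (t : int) (IM IO : A -> Prop) :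
  0 <= t <= 1 ->
  (forall a, IO a -> nilp (moves a) -> t <= sgn sig * sgz (score e a)) ->
  (forall a, IM a -> nilp (moves a) -> t <= sgn sig * sgz (score e a)) ->
  (forall a, IM a -> ~~ nilp (moves a) -> exists2 m, m \in moves a & IO (assign a m)) ->
  (forall a m, IO a -> m \in moves a -> IM (assign a m)) ->
  forall k a, U a = k ->
    (IM a -> t <= sgn sig * value e k sig a) /\
    (IO a -> t <= sgn sig * value e k (~~ sig) a).
Proof.
move=> /andP[t0 t1] hO hM hMm hOm; elim=> [|k IH] a hU.
  by split=> h /=; [apply: hM | apply: hO] => //; apply: U0_nil.
have hUm : forall m, m \in moves a -> U (assign a m) = k.
  by move=> m hm; move: hU; rewrite (U_assign hm) => -[].
split=> h /=.
- case: ifP => hn; first exact: hM.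
  have [m hm hIO] := hMm a h (negbT hn).
  have [_ /(_ hIO) hv] := IH (assign a m) (hUm m hm).
  case: sig hv {hO hM hMm hOm IH} => /= hv; rewrite ?mul1r ?mulN1r in hv *.
  + exact: le_trans hv (foldr_max_ge _ (map_f _ hm)).
  + rewrite lerNr; apply: le_trans (foldr_min_le _ (map_f _ hm)) _; by rewrite lerNr.
- case: ifP => hn; first exact: hO.
  have key : forall m, m \in moves a -> t <= sgn sig * value e k sig (assign a m).
    by move=> m hm; have [/(_ (hOm a m h hm))] := IH (assign a m) (hUm m hm).
  case: sig key {hO hM hMm hOm IH} => /= key; rewrite ?mul1r ?mulN1r.
  + apply: foldr_min_ge => //; apply/allP => x /mapP [m hm ->].
    by have := key m hm; rewrite mul1r.
  + rewrite lerNr; apply: foldr_max_le; first by rewrite lerNr opprK.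
    apply/allP => x /mapP [m hm ->]; rewrite -lerNr.
    by have := key m hm; rewrite mulN1r.
Qed.
End Game.

Section Stars.
Variable ns : seq nat.
Local Notation V := (stars_vertex ns).
Local Notation I := ('I_(size ns)).
Local Notation A := (assignment V).
Definition nn (i : I) := nth 0%N ns i.
Definition vx (i : I) (j : 'I_(nn i).+1) : V :=
  @Tagged _ i (fun i => 'I_(nth 0%N ns i).+1) j.
Definition ctr i := vx (ord0 : 'I_(nn i).+1).

Definition cv (a : A) i := a (ctr i).
Definition pl (a : A) i := #|[pred j : 'I_(nn i).+1 | (j != ord0) && (a (vx j) == Some true)]|.
Definition mi (a : A) i := #|[pred j : 'I_(nn i).+1 | (j != ord0) && (a (vx j) == Some false)]|.
Definition fr (a : A) i := #|[pred j : 'I_(nn i).+1 | (j != ord0) && (a (vx j) == None)]|.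

Lemma vx_inj i (j j' : 'I_(nn i).+1) : (vx j == vx j') = (j == j').
Proof. exact: eq_Tagged. Qed.

Lemma vx_tag i i' (j : 'I_(nn i).+1) (j' : 'I_(nn i').+1) : vx j = vx j' -> i = i'.
Proof. by move/(congr1 tag). Qed.

Lemma card_step (J : finType) (P Q : pred J) j0 :
  Q j0 -> ~~ P j0 -> (forall j, j != j0 -> Q j = P j) -> #|Q| = #|P|.+1.
Proof.
move=> hQ hP h; rewrite (cardD1 j0) [j0 \in Q]hQ add1n; congr S.
apply: eq_card => j; rewrite !inE; case: (j =P j0) => [->|/eqP hj] /=.
  by rewrite -topredE /= (negbTE hP).
by rewrite -!topredE /= h.
Qed.

Lemma card_ind (J : finType) (P : pred J) : #|P| = (\sum_j (P j : nat))%N.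
Proof. by rewrite -sum1_card big_mkcond /=; apply: eq_bigr => j _; rewrite -topredE /=; case: (P j). Qed.

Lemma leaf_count a i : (pl a i + mi a i + fr a i)%N = nn i.
Proof.
have -> : nn i = #|[pred j : 'I_(nn i).+1 | j != ord0]|.
  by rewrite cardC1 card_ord.
rewrite /pl /mi /fr !card_ind -!big_split /=; apply: eq_bigr => j _.
case: (j != ord0) => //=.
by case: (a (vx j)) => [[]|].
Qed.

Definition st (a : A) i := (cv a i, pl a i, mi a i, fr a i).

Lemma card_swap (J : finType) (P Q : pred J) j0 :
  (forall j, j != j0 -> Q j = P j) -> (#|Q| + P j0 = #|P| + Q j0)%N.
Proof.
move=> h; rewrite (cardD1 j0 Q) (cardD1 j0 P).
have -> : #|[predD1 Q & j0]| = #|[predD1 P & j0]|.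
  apply: eq_card => j; rewrite !inE; case: (j =P j0) => //= /eqP hj.
  by rewrite -!topredE /= h.
rewrite -!topredE /=; lia.
Qed.

Lemma st_assign (a : A) i (j : 'I_(nn i).+1) (b : bool) (k : I) : a (vx j) = None ->
  st (assign a (vx j, b)) k =
  if k == i then
    (if j == ord0 then (Some b, pl a k, mi a k, fr a k)
     else (cv a k, (pl a k + b)%N, (mi a k + ~~ b)%N, (fr a k).-1))
  else st a k.
Proof.
move=> ha; case: (k =P i) => [-> | hk]; last first.
  have same : forall j' : 'I_(nn k).+1, assign a (vx j, b) (vx j') = a (vx j').
    move=> j'; rewrite ffunE /=; case: eqP => // /vx_tag hk'; by case: hk.
  rewrite /st /cv /pl /mi /fr /ctr same; congr (_, _, _, _); apply: eq_card => j';
  by rewrite !inE same.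
case: (j =P ord0) => [hj | /eqP hj]; first subst j.
  have same : forall j' : 'I_(nn i).+1, j' != ord0 -> assign a (vx (ord0 : 'I_(nn i).+1), b) (vx j') = a (vx j').
    move=> j' hj'; rewrite ffunE /= vx_inj; by rewrite (negbTE hj').
  rewrite /st /cv /pl /mi /fr /ctr ffunE /= eqxx; congr (_, _, _, _); apply: eq_card => j';
  rewrite !inE; case: (j' =P ord0) => //= /eqP hj'; by rewrite same.
have same : forall j', j' != j -> ([pred j0 : 'I_(nn i).+1 | (j0 != ord0) && (assign a (vx j, b) (vx j0) == None)] j' = [pred j0 | (j0 != ord0) && (a (vx j0) == None)] j') /\
   ([pred j0 : 'I_(nn i).+1 | (j0 != ord0) && (assign a (vx j, b) (vx j0) == Some true)] j' = [pred j0 | (j0 != ord0) && (a (vx j0) == Some true)] j') /\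
   ([pred j0 : 'I_(nn i).+1 | (j0 != ord0) && (assign a (vx j, b) (vx j0) == Some false)] j' = [pred j0 | (j0 != ord0) && (a (vx j0) == Some false)] j').
  by move=> j' hj'; rewrite /= ffunE /= vx_inj (negbTE hj').
have e1 := card_swap (fun j' jj => proj1 (same j' jj)).
have e2 := card_swap (fun j' jj => proj1 (proj2 (same j' jj))).
have e3 := card_swap (fun j' jj => proj2 (proj2 (same j' jj))).
move: e1 e2 e3; rewrite /= ffunE /= eqxx ha /=; move: hj; set z := (j != ord0) => hj; rewrite hj; clear same.
rewrite /st /cv /pl /mi /fr /ctr ffunE /= vx_inj (_ : (ord0 == j) = false); last by rewrite eq_sym; exact/negbTE.
case: b => /= e1 e2 e3; rewrite ?addn0 in e1 e2 e3; congr (_, _, _, _); rewrite ?addn0 //; by [apply: e2 | apply: e3 | move: e1; rewrite addn1 => <-].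
Qed.

Definition isleaf (v : V) := val (tagged v) != 0%N.

Lemma vx_ord0 (v : V) : ~~ isleaf v -> v = ctr (tag v).
Proof.
case: v => i j; rewrite /isleaf /= => /negPn /eqP h.
by rewrite /ctr /vx; congr Tagged; apply: val_inj.
Qed.

Lemma ctr_leaf (v : V) : ~~ isleaf (ctr (tag v)).
Proof. by []. Qed.

Definition eedge (v : V) : {set V} := [set ctr (tag v); v].

Lemma edges_eq : edges (@stars_adj ns) = [set eedge v | v in isleaf].
Proof.
apply/setP => E; rewrite inE; apply/existsP/imsetP.
- case=> x /existsP [y /andP [hxy /eqP ->]].
  move: hxy; rewrite /stars_adj => /andP [/eqP htag].
  case hx: (val (tagged x) == 0%N); case hy: (val (tagged y) == 0%N) => //= _.
  + exists y; first by rewrite -topredE /= /isleaf hy.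
    by rewrite /eedge -htag -(vx_ord0 (negbT (negbF hx))).
  + exists x; first by rewrite -topredE /= /isleaf hx.
    by rewrite /eedge setUC htag -(vx_ord0 (negbT (negbF hy))).
- case=> v; rewrite -topredE /= => hv ->; exists (ctr (tag v)); apply/existsP; exists v.
  rewrite eqxx andbT /stars_adj /= eqxx /=; by move: hv; rewrite /isleaf => /negbTE ->.
Qed.

Lemma spin_split (a : A) v : spin a v = (a v == Some true)%:R - (a v == Some false)%:R.
Proof. by rewrite /spin; case: (a v) => [[]|]. Qed.

Lemma leaf_sum (a : A) i :
  (\sum_(j : 'I_(nn i).+1 | j != ord0) spin a (vx j)) = (pl a i)%:Z - (mi a i)%:Z.
Proof.
under eq_bigr do rewrite spin_split.
rewrite sumrB /pl /mi !card_ind -!natz !natr_sum.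
congr (_ - _); rewrite big_mkcond /=; apply: eq_bigr => j _;
  by case: ifP.
Qed.

Lemma score_eq (a : A) :
  score (@stars_adj ns) a = \sum_i spin a (ctr i) * ((pl a i)%:Z - (mi a i)%:Z).
Proof.
rewrite /score edges_eq big_imset /=; last first.
  move=> v w hv hw /setP h; have := h w; rewrite /eedge !inE eqxx orbT => /orP [/eqP hw'|/eqP //].
  by move: hw; rewrite -topredE /= hw' (negbTE (ctr_leaf _)).
have -> : \sum_(v in isleaf) \prod_(x in eedge v) spin a x =
          \sum_(v in isleaf) spin a (ctr (tag v)) * spin a v.
  apply: eq_bigr => v hv; rewrite /eedge big_setU1 ?big_set1 //= inE.
  apply/eqP => h; move: hv; rewrite -topredE /= -h; by rewrite (negbTE (ctr_leaf _)).
under [RHS]eq_bigr do rewrite -leaf_sum mulr_sumr.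
rewrite (sig_big_dep predT (fun i (j : 'I_(nn i).+1) => j != ord0) (fun i j => spin a (ctr i) * spin a (vx j))) /=.
apply: eq_big => v; first by rewrite -topredE /= /isleaf; case: v.
by case: v.
Qed.

Definition upd (isc b : bool) (s : option bool * nat * nat * nat) :=
  let: (c, p, m, f) := s in
  if isc then (Some b, p, m, f) else (c, (p + b)%N, (m + ~~ b)%N, f.-1).

Lemma st_upd (a : A) i (j : 'I_(nn i).+1) (b : bool) (k : I) : a (vx j) = None ->
  st (assign a (vx j, b)) k = if k == i then upd (val j == 0%N) b (st a k) else st a k.
Proof.
move=> h; rewrite st_assign //; by case: (k == i).
Qed.

Lemma st_cv (a : A) k : cv a k = (st a k).1.1.1.
Proof. by []. Qed.

Lemma st_fr (a : A) k : fr a k = (st a k).2.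
Proof. by []. Qed.

Lemma st_count (a : A) k : ((st a k).1.1.2 + (st a k).1.2 + (st a k).2)%N = nn k.
Proof. exact: leaf_count. Qed.

Lemma free_leaf (a : A) i : (0 < fr a i)%N -> exists2 j : 'I_(nn i).+1, val j != 0%N & a (vx j) = None.
Proof. by case/card_gt0P => j; rewrite -topredE /= => /andP [h /eqP h']; exists j. Qed.

Lemma fr_pos (a : A) i (j : 'I_(nn i).+1) : val j != 0%N -> a (vx j) = None -> (0 < fr a i)%N.
Proof. by move=> h h'; apply/card_gt0P; exists j; rewrite -topredE /= h' eqxx andbT. Qed.

Lemma mem_moves_vx (a : A) i (j : 'I_(nn i).+1) b : ((vx j, b) \in moves a) = (a (vx j) == None).
Proof. exact: mem_moves. Qed.

Definition sg (sig b : bool) : int := if sig == b then 1 else -1.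

Definition okS (ex sig : bool) (n : nat) (s : option bool * nat * nat * nat) : Prop :=
  let: (c, p, m, f) := s in
  match c with
  | None => p = m
  | Some b => if ex then sg sig b * (p%:Z - m%:Z) = (odd n)%:Z
              else 0 <= sg sig b * (p%:Z - m%:Z)
  end.

Definition ok ex sig (a : A) i := okS ex sig (nn i) (st a i).

Definition E (a : A) := #|[pred k : I | ~~ odd (nn k) && ((st a k).1.1.1 == None)]|.

Definition InvE sig (a : A) := (forall i, ok true sig a i) /\ ~~ odd (E a).
Definition InvL sig (a : A) := forall i, ok false sig a i.

Lemma sg_step sig b (p m : nat) (x : bool) :
  sg sig b * ((p + x)%N%:Z - (m + ~~ x)%N%:Z) = sg sig b * (p%:Z - m%:Z) + (if x == (sig == b) then 1 else -1).
Proof. by rewrite /sg; case: sig; case: b; case: x; rewrite /= !PoszD; lia. Qed.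

Lemma odd_split n : n = (2 * n./2 + odd n)%N.
Proof. by rewrite -[LHS]odd_double_half -muln2 mulnC addnC. Qed.

Lemma respE sig (a0 : A) i (j : 'I_(nn i).+1) b : InvE sig a0 -> a0 (vx j) = None ->
  exists2 m', m' \in moves (assign a0 (vx j, b)) & InvE sig (assign (assign a0 (vx j, b)) m').
Proof.
move=> [hok hE] h0; set a1 := assign a0 (vx j, b).
have st1 : forall k, st a1 k = (if k == i then upd (val j == 0%N) b (st a0 k) else st a0 k) := fun k => @st_upd a0 i j b k h0.
have cnt0 := st_count a0 i; have ok0 := hok i; rewrite /ok in ok0.
case E0: (st a0 i) cnt0 ok0 => [[[c p] m] f] /= cnt0 ok0.
have hn := odd_split (nn i).
have Eeq : forall a2 : A, (forall k, k != i -> st a2 k = st a0 k) ->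
    (odd (nn i) \/ ((st a2 i).1.1.1 == None) = (c == None)) -> E a2 = E a0.
  move=> a2 ha2 hi; apply: eq_card => k; rewrite -!topredE /=.
  case: (k =P i) => [->|/eqP hk]; last by rewrite !st_cv (ha2 k hk).
  case: hi => [-> //|]; by rewrite !st_cv E0 => ->.
case: (val j =P 0%N) => hj.
- have hc : c = None.
    have hj0 : j = ord0 by apply: val_inj.
    have : cv a0 i = None by rewrite /cv /ctr -hj0.
    by rewrite st_cv E0.
  subst c.
  case: (boolP (odd (nn i))) => hodd.
  + have [j' hj' h1] : exists2 j' : 'I_(nn i).+1, val j' != 0%N & a1 (vx j') = None.
      apply: free_leaf; rewrite st_fr st1 eqxx E0 /= hj /=; rewrite hodd in hn; lia.
    exists (vx j', sig == b); first by rewrite mem_moves_vx h1.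
    have st2 := fun k => @st_upd a1 i j' (sig == b) k h1.
    split.
    * move=> k; rewrite /ok st2 st1; case: (k =P i) => [->|/eqP hk]; last exact: hok.
      rewrite E0 /= hj (negbTE hj') /= sg_step hodd ok0 subrr mulr0 eqxx; lia.
    * rewrite (Eeq _) //; last by left.
      by move=> k hk; rewrite st2 st1 (negbTE hk).
  + have EE1 : E a0 = (E a1).+1.
      apply: (card_step (j0 := i)); first by rewrite /= hodd st_cv E0.
        by rewrite /= st_cv st1 eqxx E0 /= hj /= andbF.
      move=> k hk; by rewrite /= !st_cv st1 (negbTE hk).
    have [k hk] : exists k, k \in [pred k : I | ~~ odd (nn k) && ((st a1 k).1.1.1 == None)].
      apply/card_gt0P; rewrite -/(E a1); move: hE; rewrite EE1 /=; by case: (E a1).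
    move: hk; rewrite -topredE /= => /andP [hk1 hk2].
    have hki : k != i.
      apply/eqP => hki; move: hk2; rewrite hki st_cv st1 eqxx E0 /= hj //.
    have st1k : st a1 k = st a0 k by rewrite st1 (negbTE hki).
    have hk0 : a1 (vx (ord0 : 'I_(nn k).+1)) = None.
      by apply/eqP; move: hk2; rewrite st_cv.
    exists (vx (ord0 : 'I_(nn k).+1), true); first by rewrite mem_moves_vx hk0.
    have st2 := fun k' => @st_upd a1 k ord0 true k' hk0.
    split.
    * move=> k'; rewrite /ok st2; case: (k' =P k) => [->|/eqP hk']; last first.
        rewrite st1; case: (k' =P i) => [->|/eqP hk'']; last exact: hok.
        by rewrite E0 /= hj /= ok0 subrr mulr0 (negbTE hodd).
      have := hok k; rewrite /ok st1k.
      move: hk2; rewrite st_cv st1k; case: (st a0 k) => [[[ck pk] mk] fk] /= /eqP -> ->.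
      by rewrite subrr mulr0 (negbTE hk1).
    * have EE2 : E a1 = (E (assign a1 (vx (ord0 : 'I_(nn k).+1), true))).+1.
        apply: (card_step (j0 := k)); first by apply/andP; split.
          by rewrite /= st_cv st2 eqxx /= andbF.
        move=> k' hk'; by rewrite /= !st_cv st2 (negbTE hk').
      move: hE; rewrite EE1 EE2 /=; by rewrite negbK.
- have hj' : val j != 0%N by apply/eqP.
  have f1 : (0 < f)%N by rewrite -[f]/((c, p, m, f).2) -E0 -st_fr; exact: fr_pos hj' h0.
  have st1i : st a1 i = (c, (p + b)%N, (m + ~~ b)%N, f.-1) by rewrite st1 eqxx E0 /= (negbTE hj').
  case: (boolP ((c == None) && odd (nn i))) => [/andP [/eqP hc hodd] | hno].
  + subst c.
    have hk0 : a1 (vx (ord0 : 'I_(nn i).+1)) = None by rewrite -[a1 _]/(cv a1 i) st_cv st1i.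
    exists (vx (ord0 : 'I_(nn i).+1), sig == b); first by rewrite mem_moves_vx hk0.
    have st2 := fun k' => @st_upd a1 i ord0 (sig == b) k' hk0.
    split.
    * move=> k; rewrite /ok st2; case: (k =P i) => [->|/eqP hk]; last first.
        by rewrite st1 (negbTE hk); exact: hok.
      rewrite st1i /= sg_step ok0 subrr mulr0 add0r hodd.
      by rewrite /sg; case: (sig); case: (b).
    * rewrite (Eeq _) //; last by left.
      by move=> k hk; rewrite st2 st1 (negbTE hk).
  + have f2 : (1 < f)%N.
      move: hno ok0; case: (c) => [c0|] /=.
      * rewrite /sg; case: (sig == c0) => _; rewrite ?mul1r ?mulN1r => h; lia.
      * move=> ho h; rewrite (negbTE ho) in hn; lia.
    have [j' hj'' h1] : exists2 j' : 'I_(nn i).+1, val j' != 0%N & a1 (vx j') = None.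
      apply: free_leaf; rewrite st_fr st1i /=; lia.
    exists (vx j', ~~ b); first by rewrite mem_moves_vx h1.
    have st2 := fun k' => @st_upd a1 i j' (~~ b) k' h1.
    split.
    * move=> k; rewrite /ok st2; case: (k =P i) => [->|/eqP hk]; last first.
        by rewrite st1 (negbTE hk); exact: hok.
      rewrite st1i /= (negbTE hj'').
      move: ok0; case: (c) => [c0|] /=.
      + by rewrite !sg_step => ->; case: (sig); case: (b); case: (c0); rewrite /= ?addr0 //; lia.
      + by move=> ->; rewrite negbK addnAC.
    * rewrite (Eeq _) //; last by right; rewrite st2 eqxx st1i /= (negbTE hj'').
      by move=> k hk; rewrite st2 st1 (negbTE hk).
Qed.

Lemma respL sig (a0 : A) i (j : 'I_(nn i).+1) b : InvL sig a0 -> (forall k, ~~ odd (nn k)) ->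
  a0 (vx j) = None ->
  InvL sig (assign a0 (vx j, b)) \/
  exists2 m', m' \in moves (assign a0 (vx j, b)) & InvL sig (assign (assign a0 (vx j, b)) m').
Proof.
move=> hok hev h0; set a1 := assign a0 (vx j, b).
have st1 : forall k, st a1 k = (if k == i then upd (val j == 0%N) b (st a0 k) else st a0 k) :=
  fun k => @st_upd a0 i j b k h0.
have cnt0 := st_count a0 i; have ok0 := hok i; rewrite /ok in ok0.
case E0: (st a0 i) cnt0 ok0 => [[[c p] m] f] /= cnt0 ok0.
have hn := odd_split (nn i); rewrite (negbTE (hev i)) in hn.
have oth : forall a2 : A, (forall k, k != i -> st a2 k = st a0 k) -> ok false sig a2 i -> InvL sig a2.
  by move=> a2 h2 hi k; case: (k =P i) => [->//|/eqP hk]; rewrite /ok h2 //; exact: hok.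
case: (val j =P 0%N) => hj.
- left; apply: oth => [k hk|]; first by rewrite st1 (negbTE hk).
  have hc : c = None.
    have hj0 : j = ord0 by apply: val_inj.
    have : cv a0 i = None by rewrite /cv /ctr -hj0.
    by rewrite st_cv E0.
  subst c; by rewrite /ok st1 eqxx E0 /= hj /= ok0 subrr mulr0.
- have hj' : val j != 0%N by apply/eqP.
  have f1 : (0 < f)%N by rewrite -[f]/((c, p, m, f).2) -E0 -st_fr; exact: fr_pos hj' h0.
  have st1i : st a1 i = (c, (p + b)%N, (m + ~~ b)%N, f.-1) by rewrite st1 eqxx E0 /= (negbTE hj').
  case: (ltnP 1 f) => hf.
  + right.
    have [j' hj'' h1] : exists2 j' : 'I_(nn i).+1, val j' != 0%N & a1 (vx j') = None.
      apply: free_leaf; rewrite st_fr st1i /=; lia.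
    exists (vx j', ~~ b); first by rewrite mem_moves_vx h1.
    have st2 := fun k' => @st_upd a1 i j' (~~ b) k' h1.
    apply: oth => [k hk|]; first by rewrite st2 st1 (negbTE hk).
    rewrite /ok st2 eqxx st1i /= (negbTE hj'').
    move: ok0; case: (c) => [c0|] /=.
    * rewrite !sg_step => h; case: (b); case: (sig == c0) => /=; lia.
    * by move=> ->; rewrite negbK addnAC.
  + left; apply: oth => [k hk|]; first by rewrite st1 (negbTE hk).
    rewrite /ok st1i /=.
    have f1' : f = 1%N by lia.
    move: ok0; case: (c) => [c0|] /=.
    * rewrite sg_step /sg; case: (sig == c0); case: (b == _); rewrite ?mul1r ?mulN1r => h; lia.
    * move=> h; lia.
Qed.

Lemma freeL sig (a1 : A) : InvL sig a1 -> ~~ nilp (moves a1) ->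
  exists2 m', m' \in moves a1 & InvL sig (assign a1 m').
Proof.
move=> hok hn; have [[v b] hm] : exists m, m \in moves a1.
  by move: hn; case: (moves a1) => [|m s] //= _; exists m; rewrite mem_head.

move: hm; rewrite mem_moves; case: v => i j /eqP h0.
have oth : forall a2 : A, (forall k, k != i -> st a2 k = st a1 k) -> ok false sig a2 i -> InvL sig a2.
  by move=> a2 h2 hi k; case: (k =P i) => [->//|/eqP hk]; rewrite /ok h2 //; exact: hok.
have ok1 := hok i; rewrite /ok in ok1.
case E0: (st a1 i) ok1 => [[[c p] m] f] /= ok1.
case hc: c ok1 => [c0|] ok1.
-
  have hj : val j != 0%N.
    apply/eqP => hj; have hj0 : j = ord0 by apply: val_inj.
    have : cv a1 i = None by rewrite /cv /ctr -hj0.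
    by rewrite st_cv E0 hc.
  exists (vx j, sig == c0); first by rewrite (mem_moves a1 (vx j)) h0.
  have st2 := fun k' => @st_upd a1 i j (sig == c0) k' h0.
  apply: oth => [k hk|]; first by rewrite st2 (negbTE hk).
  rewrite /ok st2 eqxx E0 /= (negbTE hj) hc /= sg_step.
  have -> : ((sig == c0) == (sig == c0)) = true by rewrite eqxx.
  by rewrite ler_wpDr.
- have hk0 : a1 (vx (ord0 : 'I_(nn i).+1)) = None by rewrite -[a1 _]/(cv a1 i) st_cv E0 hc.
  exists (vx (ord0 : 'I_(nn i).+1), true); first by rewrite mem_moves_vx hk0.
  have st2 := fun k' => @st_upd a1 i ord0 true k' hk0.
  apply: oth => [k hk|]; first by rewrite st2 (negbTE hk).
  by rewrite /ok st2 eqxx E0 /= ok1 subrr mulr0.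
Qed.

Lemma score_sig sig (a : A) : nilp (moves a) ->
  sgn sig * score (@stars_adj ns) a =
  \sum_i (if cv a i is Some c then sg sig c * ((pl a i)%:Z - (mi a i)%:Z) else 0).
Proof.
move=> hn; rewrite score_eq mulr_sumr; apply: eq_bigr => i _.
have := moves_nil hn (ctr i); rewrite /spin /cv.
case: (a (ctr i)) => [c|] // _; rewrite mulrA; congr (_ * _).
by rewrite /sgn /sg; case: sig; case: c.
Qed.

Lemma termE sig (a : A) : InvE sig a -> nilp (moves a) -> (exists i, odd (nn i)) ->
  1 <= sgn sig * sgz (score (@stars_adj ns) a).
Proof.
move=> [hok _] hn [i0 hi0].
have -> : sgn sig * sgz (score (@stars_adj ns) a) = sgz (sgn sig * score (@stars_adj ns) a).
  by rewrite sgzM; case: (sig).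
rewrite -gtz0_ge1 sgz_gt0 score_sig //.
have hterm : forall i, (if cv a i is Some c then sg sig c * ((pl a i)%:Z - (mi a i)%:Z) else 0) = (odd (nn i))%:Z.
  move=> i; have := hok i; have := moves_nil hn (ctr i); rewrite /ok /st -/(cv a i).
  by case: (cv a i).
under eq_bigr do rewrite hterm.
rewrite (bigD1 i0) //= hi0 ltr_pwDl //; apply: sumr_ge0 => i _; exact: le0z_nat.
Qed.

Lemma termL sig (a : A) : InvL sig a -> nilp (moves a) ->
  0 <= sgn sig * sgz (score (@stars_adj ns) a).
Proof.
move=> hok hn.
have -> : sgn sig * sgz (score (@stars_adj ns) a) = sgz (sgn sig * score (@stars_adj ns) a).
  by rewrite sgzM; case: (sig).
rewrite sgz_ge0 score_sig //; apply: sumr_ge0 => i _.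
have := hok i; have := moves_nil hn (ctr i); rewrite /ok /st -/(cv a i).
by case: (cv a i).
Qed.

Definition IME sig (a : A) :=
  (exists a0 i (j : 'I_(nn i).+1) b, [/\ InvE sig a0, a0 (vx j) = None & a = assign a0 (vx j, b)])
  \/ (exists2 m, m \in moves a & InvE sig (assign a m)).

Definition IML sig (a : A) :=
  (exists a0 i (j : 'I_(nn i).+1) b, [/\ InvL sig a0, a0 (vx j) = None & a = assign a0 (vx j, b)])
  \/ InvL sig a.

Lemma nil_mem (a : A) m : nilp (moves a) -> m \in moves a -> False.
Proof. by move/nilP => ->. Qed.

Lemma IO_IM (P : A -> Prop) (a : A) m : P a -> m \in moves a ->
  exists a0 i (j : 'I_(nn i).+1) b, [/\ P a0, a0 (vx j) = None & assign a m = assign a0 (vx j, b)].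
Proof.
case: m => [[i j] b] hP; rewrite mem_moves => /eqP h.
by exists a, i, j, b.
Qed.

Lemma stratE sig : (exists i, odd (nn i)) -> forall k (a : A), U a = k ->
  (IME sig a -> 1 <= sgn sig * value (@stars_adj ns) k sig a) /\
  (InvE sig a -> 1 <= sgn sig * value (@stars_adj ns) k (~~ sig) a).
Proof.
move=> hodd; apply: value_strat => //.
- by move=> a h hn; apply: termE.
- move=> a [[a0 [i [j [b [h0 h1 ->]]]]] | [m hm _]] hn.
  + by have [m' hm' _] := respE b h0 h1; case: (nil_mem hn hm').
  + by case: (nil_mem hn hm).
- move=> a [[a0 [i [j [b [h0 h1 ->]]]]] | h] _ //.
  exact: respE.
- by move=> a m h hm; left; apply: IO_IM.
Qed.

Lemma stratL sig : (forall i, ~~ odd (nn i)) -> forall k (a : A), U a = k ->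
  (IML sig a -> 0 <= sgn sig * value (@stars_adj ns) k sig a) /\
  (InvL sig a -> 0 <= sgn sig * value (@stars_adj ns) k (~~ sig) a).
Proof.
move=> hev; apply: value_strat => //.
- by move=> a h hn; apply: termL.
- move=> a [[a0 [i [j [b [h0 h1 ->]]]]] | h] hn; last exact: termL.
  case: (respL b h0 hev h1) => [h2 | [m' hm' _]]; first exact: termL.
  by case: (nil_mem hn hm').
- move=> a [[a0 [i [j [b [h0 h1 ->]]]]] | h] hn; last exact: freeL.
  case: (respL b h0 hev h1) => [h2 | //]; exact: freeL.
- by move=> a m h hm; left; apply: IO_IM.
Qed.

Definition e0 : A := [ffun _ => None].

Lemma U_e0 : U e0 = #|V|.
Proof. by apply: eq_card => x; rewrite !inE ffunE. Qed.

Lemma st_e0 k : st e0 k = (None, 0%N, 0%N, nn k).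
Proof.
have hp : pl e0 k = 0%N by apply: eq_card0 => j; rewrite !inE ffunE andbF.
have hm : mi e0 k = 0%N by apply: eq_card0 => j; rewrite !inE ffunE andbF.
have := leaf_count e0 k; rewrite hp hm /st => <-.
by rewrite /cv ffunE hp hm.
Qed.

Lemma card_count (P : pred nat) : #|[pred k : I | P (nn k)]| = count P ns.
Proof.
rewrite -sum1_count (big_nth 0%N) big_mkord -sum1_card.
by apply: eq_bigl => k; rewrite -topredE.
Qed.

Lemma E_e0 : E e0 = count (fun n => ~~ odd n) ns.
Proof.
rewrite -card_count; apply: eq_card => k; rewrite -!topredE /= st_cv st_e0 /=.
by rewrite andbT.
Qed.

Lemma InvE_e0 sig : ~~ odd (count (fun n => ~~ odd n) ns) -> InvE sig e0.
Proof. by move=> h; split; [move=> i; rewrite /ok st_e0 | rewrite E_e0]. Qed.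

Lemma InvL_e0 sig : InvL sig e0.
Proof. by move=> i; rewrite /ok st_e0. Qed.

Lemma has_idx (P : pred nat) : has P ns -> exists i : I, P (nn i).
Proof.
case/hasP => x hx hP; have hi : (index x ns < size ns)%N by rewrite index_mem.
by exists (Ordinal hi); rewrite /nn /= nth_index.
Qed.

Lemma first_move sig i0 : ~~ odd (nn i0) -> odd (count (fun n => ~~ odd n) ns) ->
  exists2 m, m \in moves e0 & InvE sig (assign e0 m).
Proof.
move=> hi0 hc.
have h0 : e0 (vx (ord0 : 'I_(nn i0).+1)) = None by rewrite ffunE.
exists (vx (ord0 : 'I_(nn i0).+1), true); first by rewrite mem_moves_vx h0.
have st1 := fun k => @st_upd e0 i0 ord0 true k h0.
split.
- move=> k; rewrite /ok st1 st_e0; case: (k =P i0) => [->|] //=.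
  by rewrite subrr mulr0 (negbTE hi0).
- have EE : E e0 = (E (assign e0 (vx (ord0 : 'I_(nn i0).+1), true))).+1.
    apply: (card_step (j0 := i0)); first by rewrite /= hi0 st_cv st_e0.
      by rewrite /= st_cv st1 eqxx st_e0 /= andbF.
    move=> k' hk'; by rewrite /= !st_cv st1 (negbTE hk').
  by move: hc; rewrite -E_e0 EE /=.
Qed.

End Stars.

Theorem theorem3 (ns : seq nat) :
  ns != [::] -> all (fun n => 0 < n)%N ns ->
  [/\ (all (fun n => ~~ odd n) ns -> sign_game_draw (@stars_adj ns)),
      (has odd ns -> ~~ odd (count (fun n => ~~ odd n) ns) ->
         player2_wins (@stars_adj ns))
    & (has odd ns -> odd (count (fun n => ~~ odd n) ns) ->
         player1_wins (@stars_adj ns))].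
Proof.
move=> _ _; have hU := U_e0 ns.
have rng := fun p => @value_range _ (@stars_adj ns) #|stars_vertex ns| p (e0 ns).
split.
- move=> hall p; rewrite /game_value -/(e0 ns).
  have hev : forall i, ~~ odd (nn (ns:=ns) i).
    by move=> i; move/allP: hall => h; exact: (h (nth 0%N ns i) (mem_nth 0%N (ltn_ord i))).
  have [h1 h2] := stratL (ns:=ns) true hev hU; have [h3 h4] := stratL (ns:=ns) false hev hU.
  have l1 := InvL_e0 (ns:=ns) true; have l2 := InvL_e0 (ns:=ns) false.
  case: p.
  + have := h1 (or_intror l1); have := h4 l2; rewrite /sgn /=; lia.
  + have := h2 l1; have := h3 (or_intror l2); rewrite /sgn /=; lia.
- move=> ho hc p; rewrite /game_value -/(e0 ns).
  have hodd := has_idx (ns:=ns) ho.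
  have [_ h2] := stratE (ns:=ns) true hodd hU; have [_ h4] := stratE (ns:=ns) false hodd hU.
  have := rng p; case: p => /=.
  + have := h4 (InvE_e0 false hc); rewrite /sgn /=; lia.
  + have := h2 (InvE_e0 true hc); rewrite /sgn /=; lia.
- move=> ho hc p; rewrite /game_value -/(e0 ns).
  have hodd := has_idx (ns:=ns) ho.
  have [i0 hi0] : exists i : 'I_(size ns), ~~ odd (nn (ns:=ns) i).
    apply: (has_idx (ns:=ns) (P := fun n => ~~ odd n)); rewrite has_count; move: hc; by case: count.
  have [h1 _] := stratE (ns:=ns) true hodd hU; have [h3 _] := stratE (ns:=ns) false hodd hU.
  have := rng p; case: p => /=.
  + have := h1 (or_intror (first_move (ns:=ns) true hi0 hc)); rewrite /sgn /=; lia.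
  + have := h3 (or_intror (first_move (ns:=ns) false hi0 hc)); rewrite /sgn /=; lia.
Qed.
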